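(* Let $\mathbf V$ be a monoid variety satisfying $xtx\approx xtx^2$. If $\mathbb M_\lambda(ata^+)\not\subseteq\mathbf V$, then $\mathbf V$ satisfies $xtx\approx x^2tx$.
   Context: Words are elements of the free monoid $\mathfrak A^*$ over a countably infinite alphabet. Let $\tau_1$ be the congruence on $\mathfrak A^*$ generated by $a=aa$ for all letters $a$. Define $\mathbf u\,\lambda\,\mathbf v$ iff $\mathbf u\,\tau_1\,\mathbf v$, $\mathbf u,\mathbf v$ have the same set of multiple (occurring at least twice) letters, and for each multiple letter its first two occurrences are adjacent in $\mathbf u$ iff they are adjacent in $\mathbf v$. For $\lambda$-classes, $\mathtt v\le\mathtt u$ iff $\mathtt u=\mathtt p\mathtt v\mathtt s$ in $\mathfrak A^*/\lambda$. For a set $\mathtt W$ of $\lambda$-classes, $M_\lambda(\mathtt W)$ is the Rees quotient of $\mathfrak A^*/\lambda$ by the ideal of classes not $\le$ any element of $\mathtt W$, and $\mathbb M_\lambda(\mathtt W)$ is the monoid variety it generates. Here $ata^+$ denotes the $\lambda$-class $\{ata^k:k\ge1\}$. *)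

(* Defs.v *)
From mathcomp Require Import all_boot.
From Stdlib Require Import ClassicalEpsilon.

Set Implicit Arguments.
Unset Strict Implicit.
Unset Printing Implicit Defensive.

Definition word := seq nat.

(* tau_1: the congruence on A^* generated by a = aa for all letters a,
   i.e. the equivalence closure of {(p a s, p a a s)}. *)
Inductive tau1 : word -> word -> Prop :=
  | tau1_step p s (a : nat) : tau1 (p ++ a :: s) (p ++ a :: a :: s)
  | tau1_refl u : tau1 u u
  | tau1_sym u v : tau1 u v -> tau1 v u
  | tau1_trans u v w : tau1 u v -> tau1 v w -> tau1 u w.

Definition multiple (x : nat) (u : word) : Prop := 2 <= count_mem x u.

Definition first_two_adjacent (x : nat) (u : word) : Prop :=
  exists p s, x \notin p /\ u = p ++ x :: x :: s.

Definition lam (u v : word) : Prop :=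
  [/\ tau1 u v,
      (forall x, multiple x u <-> multiple x v) &
      (forall x, multiple x u -> (first_two_adjacent x u <-> first_two_adjacent x v))].

(* A set W of lambda-classes is given by the predicate of all words lying in
   these classes.  A class (represented by v) is <= some element of W iff
   some w in W equals p v s in A^*/lambda, i.e. w lambda (p ++ v ++ s). *)
Definition below (W : word -> Prop) (v : word) : Prop :=
  exists w p s, W w /\ lam w (p ++ v ++ s).

(* The lambda-class ata^+ = {a t a^k : k >= 1}, with letters a = 0, t = 1. *)
Definition ata_plus (w : word) : Prop :=
  exists k, 1 <= k /\ w = [:: 0; 1] ++ nseq k 0.

(* The Rees quotient M_lambda(W): elements are the lambda-classes <= some element
   of W (represented by words v with below W v, compared up to lambda),
   together with the zero, represented by None. *)
Definition Melt_valid (W : word -> Prop) (e : option word) : Prop :=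
  match e with None => True | Some v => below W v end.

Definition Melt_eq (e f : option word) : Prop :=
  match e, f with
  | None, None => True
  | Some u, Some v => lam u v
  | _, _ => False
  end.

Definition Mmul (W : word -> Prop) (e f : option word) : option word :=
  match e, f with
  | Some u, Some v =>
      if excluded_middle_informative (below W (u ++ v)) then Some (u ++ v) else None
  | _, _ => None
  end.

Definition Munit : option word := Some [::].

Definition Meval (W : word -> Prop) (phi : nat -> option word) (u : word) : option word :=
  foldr (fun x acc => Mmul W (phi x) acc) Munit u.

Definition Msat (W : word -> Prop) (u v : word) : Prop :=
  forall phi : nat -> option word, (forall x, Melt_valid W (phi x)) ->
    Melt_eq (Meval W phi u) (Meval W phi v).

Definition subst (sigma : nat -> word) (u : word) : word := flatten (map sigma u).

(* A monoid variety V is represented by its equational theory Id(V): the set of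
   identities u ~ v it satisfies, which is exactly a fully invariant congruence
   on the free monoid the free monoid (Birkhoff). *)
Record fi_congruence (S : word -> word -> Prop) : Prop := {
  fic_refl : forall u, S u u;
  fic_sym : forall u v, S u v -> S v u;
  fic_trans : forall u v w, S u v -> S v w -> S u w;
  fic_mul : forall u v u' v', S u v -> S u' v' -> S (u ++ u') (v ++ v');
  fic_subst : forall u v (sigma : nat -> word), S u v -> S (subst sigma u) (subst sigma v)
}.

(* MM_lambda(W) (the variety generated by M_lambda(W)) is contained in the
   variety with equational theory S iff M_lambda(W) satisfies every identity of S. *)
Definition Mvar_sub (W : word -> Prop) (S : word -> word -> Prop) : Prop :=
  forall u v, S u v -> Msat W u v.

(* Main.v *)
Require Import Defs.
From mathcomp Require Import all_boot.
From mathcomp Require Import zify.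
From Stdlib Require Import Classical ClassicalEpsilon.
Set Implicit Arguments.
Unset Strict Implicit.
Unset Printing Implicit Defensive.

Lemma nseqSr (n : nat) (a : nat) : nseq n a ++ [:: a] = nseq n.+1 a.
Proof. by elim: n => //= n ->. Qed.

Lemma ctx S (HS : fi_congruence S) P Q u v : S u v -> S (P ++ u ++ Q) (P ++ v ++ Q).
Proof.
move=> H; apply: (fic_mul HS); first exact: (fic_refl HS).
apply: (fic_mul HS) => //; exact: (fic_refl HS).
Qed.

Lemma sig_gen S (HS : fi_congruence S) (Hs : S [::0;1;0] [::0;1;0;0]) P Q R :
  S (P ++ 0 :: Q ++ 0 :: R) (P ++ 0 :: Q ++ 0 :: 0 :: R).
Proof.
have := fic_subst HS (fun y => if y == 1 then Q else [:: y]) Hs.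
rewrite /subst /= => /(ctx HS P R).
by rewrite /= -!catA.
Qed.

Lemma PC S (HS : fi_congruence S) (Hs : S [::0;1;0] [::0;1;0;0]) P R n :
  S (P ++ nseq n.+2 0 ++ R) (P ++ [:: 0; 0] ++ R).
Proof.
elim: n => [|n IH]; first exact: (fic_refl HS).
apply: (fic_trans HS) IH.
have := sig_gen HS Hs P [::] (nseq n 0 ++ R).
move/(fic_sym HS). by [].
Qed.

Lemma CL S (HS : fi_congruence S) (Hs : S [::0;1;0] [::0;1;0;0]) Q b :
  S (0 :: Q ++ nseq b.+1 0) (0 :: Q ++ [:: 0]).
Proof.
elim: b => [|b IH]; first exact: (fic_refl HS).
apply: (fic_trans HS) IH.
have := sig_gen HS Hs [::] Q (nseq b 0).
move/(fic_sym HS). by [].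
Qed.

Definition tgt (S : word -> word -> Prop) := S [::0;1;0] [::0;0;1;0].

Lemma triv0 S (HS : fi_congruence S) (H : S [::] [:: 0]) : tgt S.
Proof.
have h1 := fic_subst HS (fun _ => [::0;1;0]) H.
have h2 := fic_subst HS (fun _ => [::0;0;1;0]) H.
rewrite /subst /= in h1 h2.
apply: (fic_trans HS) h2; exact: (fic_sym HS).
Qed.

Lemma triv S (HS : fi_congruence S) (Hs : S [::0;1;0] [::0;1;0;0]) n :
  S [::] (nseq n.+1 0) -> tgt S.
Proof.
case: n => [|n] H; first exact: triv0.
apply: (triv0 HS).
have H2 : S [::] [::0;0].
  apply: (fic_trans HS) H _. have := PC HS Hs [::] [::] n. by rewrite /= !cats0.
have H3 : S [:: 0] [:: 0; 0; 0] := ctx HS [::0] [::] H2.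
apply: (fic_sym HS); apply: (fic_trans HS) H3 _.
have := PC HS Hs [::] [::] 1. rewrite /= => h. apply: (fic_trans HS) h _.
exact: (fic_sym HS).
Qed.

Lemma x2 S (HS : fi_congruence S) (Hs : S [::0;1;0] [::0;1;0;0]) n :
  S [:: 0] (nseq n.+2 0) -> tgt S.
Proof.
move=> H.
have H2 : S [::0] [::0;0].
  apply: (fic_trans HS) H _. have := PC HS Hs [::] [::] n. by rewrite /= !cats0.
exact: (ctx HS [::] [::1;0] H2).
Qed.

Definition cls n := minn n 2.

Lemma countC S (HS : fi_congruence S) (Hs : S [::0;1;0] [::0;1;0;0]) m n :
  S (nseq m 0) (nseq n 0) -> cls m <> cls n -> tgt S.
Proof.
wlog le : m n / m <= n.
  move=> W H Hc; case: (leqP m n) => h; first exact: W H Hc.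
  apply: W (ltnW h) (fic_sym HS H) _. by move=> e; apply: Hc.
rewrite /cls; case: m le => [|[|m]] le H Hc.
- case: n le H Hc => [|n] //= _ H _. exact: (triv HS Hs H).
- case: n le H Hc => [|[|n]] //= _ H _. exact: (x2 HS Hs H).
- case: n le H Hc => [|[|n]] //=; rewrite !minnE; lia.
Qed.

Lemma D1 S (HS : fi_congruence S) (Hs : S [::0;1;0] [::0;1;0;0]) :
  S [::0;1] [::1;0] -> tgt S.
Proof.
move=> H.
have h1 : S [::0;1;0] [::0;0;1] := ctx HS [::0] [::] (fic_sym HS H).
have h2 : S [::0;0;1;0] [::0;0;0;1] := ctx HS [::0;0] [::] (fic_sym HS H).
have h3 := PC HS Hs [::] [::1] 1.
rewrite /tgt; apply: (fic_trans HS) h1 _; apply: (fic_sym HS).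
apply: (fic_trans HS) h2 _; exact: h3.
Qed.

Lemma D2 S (HS : fi_congruence S) (Hs : S [::0;1;0] [::0;1;0;0]) b d :
  S (0::1::nseq b.+1 0) (1::nseq d.+2 0) -> tgt S.
Proof.
move=> H.
have h : S [::0;1;0] [::1;0;0].
  apply: (fic_trans HS) (fic_sym HS (CL HS Hs [::1] b)) _.
  apply: (fic_trans HS) H _.
  have := PC HS Hs [::1] [::] d; by rewrite /= !cats0.
have h2 : S [::0;0;1;0] [::0;1;0;0] := ctx HS [::0] [::] h.
rewrite /tgt; apply: (fic_sym HS); apply: (fic_trans HS) h2 _.
exact: (fic_sym HS).
Qed.

Lemma D3 S (HS : fi_congruence S) (Hs : S [::0;1;0] [::0;1;0;0]) b c d :
  S (0::1::nseq b.+1 0) (nseq c.+2 0 ++ 1 :: nseq d 0) -> tgt S.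
Proof.
move=> H.
have h : S [::0;1;0] ([::0;0] ++ 1 :: nseq d 0).
  apply: (fic_trans HS) (fic_sym HS (CL HS Hs [::1] b)) _.
  apply: (fic_trans HS) H _.
  exact: (PC HS Hs [::] (1 :: nseq d 0) c).
clear H; case: d h => [|d] h.
- have h2 : S [::0;0;1;0] [::0;0;0;1] := ctx HS [::0] [::] h.
  have h3 := PC HS Hs [::] [::1] 1.
  rewrite /tgt; apply: (fic_sym HS); apply: (fic_trans HS) h2 _.
  apply: (fic_trans HS) h3 _. exact: (fic_sym HS).
- apply: (fic_trans HS) h _.
  exact: (CL HS Hs [::0;1] d).
Qed.

Lemma tau1_mem u v : tau1 u v -> forall x, (x \in u) = (x \in v).
Proof.
elim => [p s a|u0|u0 v0 _ IH|u0 v0 w0 _ IH1 _ IH2] x.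
- by rewrite !mem_cat !in_cons; case: (x == a).
- by [].
- by rewrite IH.
- by rewrite IH1 IH2.
Qed.

Lemma not_fta0 s : ~ first_two_adjacent 0 (0 :: 1 :: s).
Proof.
move=> [p [s' [Hp E]]]; case: p Hp E => [|y p] Hp /=; first by case.
by case=> Ey; rewrite -Ey in_cons eqxx in Hp.
Qed.

Definition bin (x : nat) := (x == 0) || (x == 1).

Lemma dec0 s : all bin s -> count_mem 1 s = 0 -> s = nseq (size s) 0.
Proof.
elim: s => [|x s IH] //= /andP [hx hs].
case/orP: hx => /eqP -> //= h. by rewrite -IH.
Qed.

Lemma dec1 s : all bin s -> count_mem 1 s = 1 -> exists a b, s = nseq a 0 ++ 1 :: nseq b 0.
Proof.
elim: s => [|x s IH] //= /andP [hx hs].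
case/orP: hx => /eqP -> /= h.
- have [a [b ->]] := IH hs h. by exists a.+1, b.
- exists 0, (size s). rewrite /= -dec0 //. by case: h.
Qed.

Lemma count_nseq0 x j : count_mem x (nseq j 0) = (x == 0) * j.
Proof. by rewrite count_nseq /= eq_sym. Qed.

Lemma count_form x a b : count_mem x (nseq a 0 ++ 1 :: nseq b 0) = (x == 0) * (a + b) + (x == 1).
Proof.
rewrite count_cat /= !count_nseq /= (eq_sym 0) (eq_sym 1).
case: (x == 0); case: (x == 1); rewrite /=; lia.
Qed.

Lemma lam_ata k z : 1 <= k -> lam (0::1::nseq k 0) z ->
  exists a b, a <= 1 /\ z = nseq a 0 ++ 1 :: nseq b 0.
Proof.
move=> hk [Ht Hm Ha].
have mem := tau1_mem Ht.
have Hall : all bin z.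
  apply/allP => x; rewrite -mem !inE mem_nseq /bin.
  by case/orP => [->|/orP [->|/andP [_ ->]]]; rewrite ?orbT.
have c1 : count_mem 1 z = 1.
  have h1 : ~ multiple 1 z.
    move/Hm; rewrite /multiple /= count_nseq /=; lia.
  have h2 : 0 < count_mem 1 z by rewrite -has_count has_pred1 -mem !inE.
  rewrite /multiple in h1; lia.
have [a [b E]] := dec1 Hall c1.
exists a, b; split => //.
case: (leqP a 1) => // ha.
exfalso.
have hm : multiple 0 (0::1::nseq k 0) by rewrite /multiple /= count_nseq /=; lia.
have : first_two_adjacent 0 z.
  exists [::], (nseq (a - 2) 0 ++ 1 :: nseq b 0); split => //.
  rewrite E. case: a ha {E} => [|[|a]] //= _. by rewrite subn2.
by move/(Ha 0 hm)/not_fta0.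
Qed.

Lemma factor_good P w Q a b : a <= 1 -> P ++ w ++ Q = nseq a 0 ++ 1 :: nseq b 0 ->
  (exists j, w = nseq j 0) \/ (exists c d, c <= 1 /\ w = nseq c 0 ++ 1 :: nseq d 0).
Proof.
move=> ha E.
have Hall : all bin w.
  apply/allP => x hx.
  have : x \in nseq a 0 ++ 1 :: nseq b 0 by rewrite -E !mem_cat hx orbT.
  rewrite mem_cat !inE !mem_nseq /bin.
  by case/orP => [/andP [_ ->]|/orP [->|/andP [_ ->]]]; rewrite ?orbT.
have ct := congr1 (count_mem 1) E.
rewrite count_form !count_cat /= in ct.
have e1 : count_mem 1 P + (count_mem 1 w + count_mem 1 Q) = 1 by rewrite ct.
clear ct.
case: (boolP (1 \in w)) => h1.
- right.
  have c1 : count_mem 1 w = 1.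
    have : 0 < count_mem 1 w by rewrite -has_count has_pred1.
    lia.
  have [c [d Ew]] := dec1 Hall c1.
  exists c, d; split => //.
  have cP : count_mem 1 P = 0 by lia.
  have nP : 1 \notin P by rewrite -has_pred1 has_count cP.
  have i1 := congr1 (index 1) E.
  rewrite Ew -catA /= catA in i1.
  rewrite (index_pivot _ (s1 := P ++ nseq c 0)) in i1; last first.
    by rewrite mem_cat negb_or nP mem_nseq andbF.
  rewrite index_pivot in i1; last by rewrite mem_nseq andbF.
  rewrite size_cat !size_nseq in i1. lia.
- left. exists (size w). apply: dec0 => //.
  by apply/eqP; rewrite -leqn0 leqNgt -has_count has_pred1.
Qed.

Definition good (w : word) := (exists j, w = nseq j 0) \/ (exists c d, c <= 1 /\ w = nseq c 0 ++ 1 :: nseq d 0).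

Lemma below_good w : below ata_plus w -> good w.
Proof.
move=> [w0 [p [s [[k [hk ->]] hl]]]].
have [a [b [ha E]]] := lam_ata hk hl.
exact: (factor_good ha E).
Qed.

Lemma good_no2 w : below ata_plus w -> 2 \notin w.
Proof.
move/below_good => [[j ->]|[c [d [_ ->]]]]; by rewrite ?mem_cat ?inE ?mem_nseq ?andbF.
Qed.

Lemma lam_refl u : lam u u.
Proof. split => //; exact: tau1_refl. Qed.

Lemma below_nil : below ata_plus [::].
Proof.
exists [:: 0; 1; 0], [::], [:: 0; 1; 0]; split; last exact: lam_refl.
by exists 1.
Qed.

Lemma below_suffix u v : below ata_plus (u ++ v) -> below ata_plus v.
Proof.
move=> [w [p [s [hw hl]]]]; exists w, (p ++ u), s; split => //.
by move: hl; rewrite !catA.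
Qed.

Definition sg (phi : nat -> option word) y := if phi y is Some v then v else [:: 2].

Lemma Meval_eq phi u : (forall x, Melt_valid ata_plus (phi x)) ->
  (below ata_plus (subst (sg phi) u) /\ Meval ata_plus phi u = Some (subst (sg phi) u)) \/
  (~ below ata_plus (subst (sg phi) u) /\ Meval ata_plus phi u = None).
Proof.
move=> Hv; elim: u => [|x u IH]; first by left; split; [exact: below_nil|].
have -> : Meval ata_plus phi (x::u) = Mmul ata_plus (phi x) (Meval ata_plus phi u) by [].
have -> : subst (sg phi) (x::u) = sg phi x ++ subst (sg phi) u by [].
rewrite /sg; case E: (phi x) => [v|].
- case: IH => [[hb ->]|[hb ->]].
  + rewrite /=. case: excluded_middle_informative => h; [left|right]; by split.
  + right; split => //. move/below_suffix. exact: hb.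
- right; split => //. move/good_no2. by rewrite in_cons eqxx.
Qed.

Lemma tauN P Q (a n : nat) : tau1 (P ++ nseq n.+1 a ++ Q) (P ++ [:: a] ++ Q).
Proof.
elim: n => [|n IH]; first exact: tau1_refl.
apply: tau1_trans IH.
exact: (tau1_sym (tau1_step P (nseq n a ++ Q) a)).
Qed.

Lemma tauNN P (a n m : nat) : tau1 (P ++ nseq n.+1 a) (P ++ nseq m.+1 a).
Proof.
have h1 := tauN P [::] a n. have h2 := tauN P [::] a m.
rewrite !cats0 in h1 h2.
exact: tau1_trans h1 (tau1_sym h2).
Qed.

Lemma lamN j j' : 2 <= j -> 2 <= j' -> lam (nseq j 0) (nseq j' 0).
Proof.
case: j => [|[|j]] // _; case: j' => [|[|j']] // _.
split.
- exact: (tauNN [::] 0 j.+1 j'.+1).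
- move=> x; rewrite /multiple !count_nseq0; case: (x == 0) => /=; lia.
- move=> x; rewrite /multiple count_nseq0; case: eqP => [->|] /= _; last lia.
  split => _; by [exists [::], (nseq j 0) | exists [::], (nseq j' 0)].
Qed.

Lemma lamA b d : 1 <= b -> 1 <= d -> lam (0::1::nseq b 0) (0::1::nseq d 0).
Proof.
case: b => [|b] // _; case: d => [|d] // _.
split.
- exact: (tauNN [::0;1] 0 b d).
- move=> x; rewrite /multiple -[0::1::nseq b.+1 0]/(nseq 1 0 ++ 1 :: nseq b.+1 0).
  rewrite -[0::1::nseq d.+1 0]/(nseq 1 0 ++ 1 :: nseq d.+1 0) !count_form.
  case: (x == 0); case: (x == 1) => /=; lia.
- move=> x; rewrite /multiple -[0::1::nseq b.+1 0]/(nseq 1 0 ++ 1 :: nseq b.+1 0) count_form.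
  case: eqP => [->|] /= _; last by case: (x == 1) => /=; lia.
  split => H; exfalso; exact: (not_fta0 H).
Qed.

Lemma lamB b d : 2 <= b -> 2 <= d -> lam (1::nseq b 0) (1::nseq d 0).
Proof.
case: b => [|[|b]] // _; case: d => [|[|d]] // _.
split.
- exact: (tauNN [::1] 0 b.+1 d.+1).
- move=> x; rewrite /multiple -[1::nseq b.+2 0]/(nseq 0 0 ++ 1 :: nseq b.+2 0).
  rewrite -[1::nseq d.+2 0]/(nseq 0 0 ++ 1 :: nseq d.+2 0) !count_form.
  case: (x == 0); case: (x == 1) => /=; lia.
- move=> x; rewrite /multiple -[1::nseq b.+2 0]/(nseq 0 0 ++ 1 :: nseq b.+2 0) count_form.
  case: eqP => [->|] /= _; last by case: (x == 1) => /=; lia.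
  split => _; by [exists [::1], (nseq d 0) | exists [::1], (nseq b 0)].
Qed.

Lemma below_nseq j : below ata_plus (nseq j 0).
Proof.
exists (0 :: 1 :: nseq j.+1 0), [::0;1], [::0]; split.
  by exists j.+1.
by rewrite /= nseqSr; exact: lam_refl.
Qed.

Lemma below_form c d : c <= 1 -> below ata_plus (nseq c 0 ++ 1 :: nseq d 0).
Proof.
move=> hc; exists (0 :: 1 :: nseq d.+1 0), (nseq (1 - c) 0), [::0]; split.
  by exists d.+1.
case: c hc => [|[|c]] //= _; by rewrite nseqSr; exact: lam_refl.
Qed.

Lemma subst_count z u : subst (fun y => if y == z then [::0] else [::]) u = nseq (count_mem z u) 0.
Proof.
elim: u => // y u IH.
have -> : subst (fun y => if y == z then [::0] else [::]) (y :: u) =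
  (if y == z then [::0] else [::]) ++ subst (fun y => if y == z then [::0] else [::]) u by [].
by rewrite IH /=; case: (y == z).
Qed.

Lemma cls0 n : cls n = cls 0 -> n = 0.
Proof. rewrite /cls !minnE; lia. Qed.
Lemma cls1 n : cls n = cls 1 -> n = 1.
Proof. rewrite /cls !minnE; lia. Qed.

Lemma K S (HS : fi_congruence S) (Hs : S [::0;1;0] [::0;1;0;0]) w w' :
  S w w' -> below ata_plus w -> ~ (below ata_plus w' /\ lam w w') -> tgt S.
Proof.
move=> H hb hn.
case: (classic (tgt S)) => // nT; exfalso.
have cnt : forall z, cls (count_mem z w) = cls (count_mem z w').
  move=> z; apply: NNPP => hc; apply: nT.
  apply: (countC HS Hs) hc.
  have := fic_subst HS (fun y => if y == z then [::0] else [::]) H.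
  by rewrite !subst_count.
have Hall : all bin w'.
  apply/allP => x hx; apply/negPn/negP => hnb.
  have c0 : count_mem x w = 0.
    move: hnb; rewrite /bin negb_or => /andP [/negbTE h0 /negbTE h1].
    case: (below_good hb) => [[j ->]|[c [d [_ ->]]]].
    + by rewrite count_nseq0 h0.
    + by rewrite count_form h0 h1.
  have := cnt x; rewrite c0 /cls ?minnE.
  have : 0 < count_mem x w' by rewrite -has_count has_pred1.
  lia.
case: (below_good hb) => [[j Ew]|[a [b [ha Ew]]]].
- have c1 := cnt 1; rewrite Ew count_nseq0 /= in c1.
  have Ew' : w' = nseq (size w') 0 by apply: dec0 => //; exact: (cls0 (esym c1)).
  have c0 := cnt 0; rewrite Ew Ew' !count_nseq0 /= /cls ?minnE in c0.
  apply: hn; rewrite Ew Ew'; split; first exact: below_nseq.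
  case: (eqVneq j (size w')) => [<-|ne]; first exact: lam_refl.
  apply: lamN; lia.
- have c1 := cnt 1; rewrite Ew count_form /= in c1.
  have [c [d Ew']] : exists c d, w' = nseq c 0 ++ 1 :: nseq d 0.
    apply: dec1 => //; exact: (cls1 (esym c1)).
  have c0 := cnt 0; rewrite Ew Ew' !count_form /= /cls ?minnE in c0.
  rewrite Ew Ew' in H hn.
  clear Ew Ew' c1 Hall cnt hb.
  case: a ha H hn c0 => [|[|a]] // _ H hn c0.
  +
    case: c H hn c0 => [|c] H hn c0.
    * apply: hn; split; first exact: below_form.
      case: (eqVneq b d) => [<-|ne]; first exact: lam_refl.
      apply: lamB; lia.
    * case: b H hn c0 => [|[|b]] H hn c0; first lia.
      - have ec : c = 0 by lia.
        have ed : d = 0 by lia.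
        subst c d. apply: nT; apply: (D1 HS Hs). exact: (fic_sym HS H).
      - apply: nT; apply: (D3 HS Hs (b := b.+1) (c := c) (d := d)).
        by have := ctx HS [::0] [::] H; rewrite !cats0.
  +
    case: c H hn c0 => [|[|c]] H hn c0.
    * case: b H hn c0 => [|b] H hn c0.
      - have ed : d = 1 by lia.
        subst d. apply: nT; exact: (D1 HS Hs H).
      - have [d' ed] : exists d', d = d'.+2 by exists d.-2; lia.
        subst d. apply: nT; exact: (D2 HS Hs H).
    * apply: hn; split; first exact: below_form.
      case: (eqVneq b d) => [<-|ne]; first exact: lam_refl.
      apply: lamA; lia.
    * case: b H hn c0 => [|b] H hn c0; first lia.
      apply: nT; exact: (D3 HS Hs H).
Qed.

Theorem lemma4p4 (S : word -> word -> Prop) (HS : fi_congruence S) :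
  S [:: 0; 1; 0] [:: 0; 1; 0; 0] ->
  ~ Mvar_sub ata_plus S ->
  S [:: 0; 1; 0] [:: 0; 0; 1; 0].
Proof.
move=> Hs nsub.
have [u [v [Huv nM]]] : exists u v, S u v /\ ~ Msat ata_plus u v.
  apply: NNPP => hne; apply: nsub => u v Huv; apply: NNPP => hm; apply: hne.
  by exists u, v.
have [phi [Hv nE]] : exists phi, (forall x, Melt_valid ata_plus (phi x)) /\
    ~ Melt_eq (Meval ata_plus phi u) (Meval ata_plus phi v).
  apply: NNPP => hne; apply: nM => phi Hv; apply: NNPP => hm; apply: hne.
  by exists phi.
have Hu' := fic_subst HS (sg phi) Huv.
case: (Meval_eq u Hv) => [[bu eu]|[bu eu]]; case: (Meval_eq v Hv) => [[bv ev]|[bv ev]];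
  rewrite eu ev /= in nE.
- apply: (K HS Hs Hu' bu); by case.
- apply: (K HS Hs Hu' bu); by case.
- apply: (K HS Hs (fic_sym HS Hu') bv); by case.
- by [].
Qed.
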